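(* A coproduct in a $*$-category is orthogonal if and only if it can be extended to an orthogonal biproduct; that is, a coproduct $(X,s_1,\dots,s_n)$ of $X_1,\dots,X_n$ is orthogonal if and only if there exist morphisms $r_k\colon X\to X_k$ ($k=1,\dots,n$) such that $(X,s_1,r_1,\dots,s_n,r_n)$ is an orthogonal biproduct.
   Context: A $*$-category is a category with a choice of $f^*\colon Y\to X$ for each $f\colon X\to Y$ such that $1^*=1$, $(gf)^*=f^*g^*$, $(f^* )^*=f$; an endomorphism $e$ is Hermitian if $e^*=e$. A coproduct $(X,s_1,\dots,s_n)$ is orthogonal if $s_k^*s_j=0$ for all $j\neq k$. A biproduct $(X,s_1,r_1,\dots,s_n,r_n)$ (in a category with a zero object: $(X,s_1,\dots,s_n)$ a coproduct, $(X,r_1,\dots,r_n)$ a product, $r_ks_k=1$, $r_ks_j=0$ for $j\neq k$) is orthogonal if each idempotent $s_kr_k$ is Hermitian. *)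

(* Defs.v *)
From mathcomp Require Import all_boot.
Set Implicit Arguments. Unset Strict Implicit. Unset Printing Implicit Defensive.

Record Category := {
  Ob :> Type;
  Hom : Ob -> Ob -> Type;
  idm : forall A, Hom A A;
  comp : forall A B C, Hom B C -> Hom A B -> Hom A C;  (* comp g f = g o f *)
  comp_assoc : forall A B C D (h : Hom C D) (g : Hom B C) (f : Hom A B),
      comp h (comp g f) = comp (comp h g) f;
  id_left : forall A B (f : Hom A B), comp (idm B) f = f;
  id_right : forall A B (f : Hom A B), comp f (idm A) = f
}.
Arguments Hom {c} _ _.
Arguments idm {c} A.
Arguments comp {c A B C} _ _.

Record StarCategory := {
  cat :> Category;
  star : forall (A B : cat), Hom A B -> Hom B A;
  star_id : forall A : cat, star (idm A) = idm A;
  star_comp : forall (A B C : cat) (g : Hom B C) (f : Hom A B),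
      star (comp g f) = comp (star f) (star g);
  star_invol : forall (A B : cat) (f : Hom A B), star (star f) = f
}.
Arguments star {s A B} _.

Definition hermitian (C : StarCategory) (A : C) (e : Hom A A) : Prop :=
  star e = e.

Definition is_zero_object (C : Category) (Z : C) : Prop :=
  forall A : C,
    (inhabited (Hom A Z) /\ forall f g : Hom A Z, f = g) /\
    (inhabited (Hom Z A) /\ forall f g : Hom Z A, f = g).

Definition has_zero_object (C : Category) : Prop :=
  exists Z : C, is_zero_object Z.

(** f is the zero morphism: it factors through a zero object (in a category
    with a zero object this is the unique zero morphism A -> B). *)
Definition is_zero_mor (C : Category) (A B : C) (f : Hom A B) : Prop :=
  exists (Z : C) (g : Hom A Z) (h : Hom Z B), is_zero_object Z /\ f = comp h g.

Definition is_coproduct (C : Category) (n : nat) (Xs : 'I_n -> C) (X : C)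
    (s : forall k, Hom (Xs k) X) : Prop :=
  forall (Y : C) (f : forall k, Hom (Xs k) Y),
    exists u : Hom X Y, (forall k, comp u (s k) = f k) /\
      forall u' : Hom X Y, (forall k, comp u' (s k) = f k) -> u' = u.

Definition is_product (C : Category) (n : nat) (Xs : 'I_n -> C) (X : C)
    (r : forall k, Hom X (Xs k)) : Prop :=
  forall (Y : C) (f : forall k, Hom Y (Xs k)),
    exists u : Hom Y X, (forall k, comp (r k) u = f k) /\
      forall u' : Hom Y X, (forall k, comp (r k) u' = f k) -> u' = u.

Arguments is_coproduct {C n} Xs X s.
Arguments is_product {C n} Xs X r.

Definition orthogonal_coproduct (C : StarCategory) (n : nat) (Xs : 'I_n -> C)
    (X : C) (s : forall k, Hom (Xs k) X) : Prop :=
  is_coproduct Xs X s /\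
  forall j k : 'I_n, j != k -> is_zero_mor (comp (star (s k)) (s j)).

Definition is_biproduct (C : Category) (n : nat) (Xs : 'I_n -> C) (X : C)
    (s : forall k, Hom (Xs k) X) (r : forall k, Hom X (Xs k)) : Prop :=
  [/\ is_coproduct Xs X s, is_product Xs X r,
      forall k, comp (r k) (s k) = idm (Xs k) &
      forall j k : 'I_n, j != k -> is_zero_mor (comp (r k) (s j))].

Arguments is_biproduct {C n} Xs X s r.

Definition orthogonal_biproduct (C : StarCategory) (n : nat) (Xs : 'I_n -> C)
    (X : C) (s : forall k, Hom (Xs k) X) (r : forall k, Hom X (Xs k)) : Prop :=
  is_biproduct Xs X s r /\ forall k, hermitian (comp (s k) (r k)).
Arguments orthogonal_coproduct {C n} Xs X s.
Arguments orthogonal_biproduct {C n} Xs X s r.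

(* Main.v *)
Require Import Defs.
From mathcomp Require Import all_boot.
From Stdlib Require Import ClassicalEpsilon.
Local Notation comp := Defs.comp.

Lemma zero_compl (C : Category) (A B D : C) (f : Hom A B) (g : Hom B D) :
  is_zero_mor f -> is_zero_mor (comp g f).
Proof.
move=> [Z [a [h [HZ ->]]]]; exists Z, a, (comp g h); split => //.
by rewrite comp_assoc.
Qed.

Lemma zero_compr (C : Category) (A B D : C) (f : Hom A B) (g : Hom D A) :
  is_zero_mor f -> is_zero_mor (comp f g).
Proof.
move=> [Z [a [h [HZ ->]]]]; exists Z, (comp a g), h; split => //.
by rewrite comp_assoc.
Qed.

Lemma zero_star (C : StarCategory) (A B : C) (f : Hom A B) :
  is_zero_mor f -> is_zero_mor (star f).
Proof.
move=> [Z [a [h [HZ ->]]]]; exists Z, (star h), (star a); split => //.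
by rewrite star_comp.
Qed.

Lemma zero_uniq (C : Category) (A B : C) (f f' : Hom A B) :
  is_zero_mor f -> is_zero_mor f' -> f = f'.
Proof.
move=> [Z [a [h [HZ ->]]]] [Z' [a' [h' [HZ' ->]]]].
have [[t] _] := (HZ Z').2.
have -> : h = comp h' t by apply: (HZ B).2.2.
rewrite -comp_assoc; congr (comp h' _); by apply: (HZ' A).1.2.
Qed.

Theorem proposition4p2 (C : StarCategory) (HZ : has_zero_object C)
    (n : nat) (Xs : 'I_n -> C) (X : C) (s : forall k, Hom (Xs k) X)
    (Hcop : is_coproduct Xs X s) :
  orthogonal_coproduct Xs X s <->
  exists r : forall k, Hom X (Xs k), orthogonal_biproduct Xs X s r.
Proof.
have epi : forall (Y : C) (u u' : Hom X Y),
    (forall j, comp u (s j) = comp u' (s j)) -> u = u'.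
  move=> Y u u' H.
  have [w [_ Hw]] := Hcop Y (fun j => comp u' (s j)).
  by rewrite (Hw u H) (Hw u' (fun j => erefl)).
have mono : forall (Y : C) (u u' : Hom Y X),
    (forall j, comp (star (s j)) u = comp (star (s j)) u') -> u = u'.
  move=> Y u u' H.
  rewrite -(star_invol u) -(star_invol u'); congr star.
  apply: epi => j.
  by have := congr1 star (H j); rewrite !star_comp !star_invol.
split.
- move=> [_ Horth].
  case: HZ => Z HZ0.
  have [[z] _] := (HZ0 X).1.
  pose zero j k : Hom (Xs j) (Xs k) := comp (star (comp z (s k))) (comp z (s j)).
  have zeroP : forall j k, is_zero_mor (zero j k).
    move=> j k; exists Z, (comp z (s j)), (star (comp z (s k))); split => //.
  pose delta j k : Hom (Xs j) (Xs k) :=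
    match j =P k with
    | ReflectT e => eq_rect j (fun i => Hom (Xs j) (Xs i)) (idm (Xs j)) k e
    | ReflectF _ => zero j k
    end.
  have deltakk : forall k, delta k k = idm (Xs k).
    move=> k; rewrite /delta; case: (k =P k) => // e.
    by rewrite (eq_irrelevance e erefl).
  have deltajk : forall j k, j != k -> delta j k = zero j k.
    move=> j k Hjk; rewrite /delta; case: (j =P k) => // e.
    by rewrite e eqxx in Hjk.
  have rex : forall k, exists rk : Hom X (Xs k), forall j, comp rk (s j) = delta j k.
    by move=> k; have [u [Hu _]] := Hcop (Xs k) (fun j => delta j k); exists u.
  have [r Hr] : exists r : forall k, Hom X (Xs k),
      forall k j, comp (r k) (s j) = delta j k.
    exists (fun k => proj1_sig (constructive_indefinite_description _ (rex k))).
    by move=> k j; case: (constructive_indefinite_description _ (rex k)).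
  have Hrkk : forall k, comp (r k) (s k) = idm _ by move=> k; rewrite Hr deltakk.
  have Hrjk : forall j k, j != k -> is_zero_mor (comp (r k) (s j)).
    by move=> j k H; rewrite Hr deltajk.
  clear Hr rex deltakk deltajk delta.
  have ha : forall k, star (comp (star (s k)) (s k)) = comp (star (s k)) (s k).
    by move=> k; rewrite star_comp star_invol.
  have hc : forall k, star (comp (r k) (star (r k))) = comp (r k) (star (r k)).
    by move=> k; rewrite star_comp star_invol.
  have sk : forall k, s k = comp (star (r k)) (comp (star (s k)) (s k)).
    move=> k; apply: mono => j; case: (eqVneq j k) => [->|Hjk].
      by rewrite comp_assoc -star_comp Hrkk star_id id_left.
    apply: zero_uniq.
      by apply: Horth; rewrite eq_sym.
    by rewrite comp_assoc -star_comp; apply: zero_compr; apply: zero_star; apply: Hrjk.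
  have ca : forall k, comp (comp (r k) (star (r k))) (comp (star (s k)) (s k)) = idm _.
    by move=> k; rewrite -comp_assoc -sk Hrkk.
  have ac : forall k, comp (comp (star (s k)) (s k)) (comp (r k) (star (r k))) = idm _.
    by move=> k; have := congr1 star (ca k); rewrite star_comp ha hc star_id.
  have rk : forall k, r k = comp (comp (r k) (star (r k))) (star (s k)).
    move=> k; apply: epi => j; case: (eqVneq j k) => [->|Hjk].
      by rewrite Hrkk -comp_assoc ca.
    apply: zero_uniq; first exact: Hrjk.
    by rewrite -comp_assoc; apply: zero_compl; apply: Horth.
  have sa : forall k, star (s k) = comp (comp (star (s k)) (s k)) (r k).
    by move=> k; rewrite {1}(rk k) comp_assoc ac id_left.
  exists r; split; last first.
    move=> k; rewrite /hermitian star_comp {1}(rk k) star_comp star_invol hc.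
    by rewrite -comp_assoc -rk.
  split => //.
  move=> Y f.
  have [v [Hv _]] := Hcop Y (fun k => comp (star (f k)) (comp (star (s k)) (s k))).
  have Hex : forall k, comp (r k) (star v) = f k.
    move=> k; rewrite {1}(rk k) -comp_assoc -star_comp Hv star_comp star_invol ha.
    by rewrite comp_assoc ca id_left.
  exists (star v); split => // u' Hu'.
  apply: mono => j.
  by rewrite (sa j) -!comp_assoc Hu' Hex.
- move=> [r [[_ _ Hrkk Hrjk] Hh]]; split => // j k Hjk.
  have e : star (s k) = comp (star (s k)) (comp (s k) (r k)).
    by rewrite -(Hh k) star_comp comp_assoc -star_comp Hrkk star_id id_left.
  rewrite e -!comp_assoc.
  by apply: zero_compl; apply: zero_compl; apply: Hrjk.
Qed.
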